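(* Assume (A1) and fix all parameters except $\omega$ (so $E=\mu\sigma(1-2b^2\beta)$ is fixed). Let $\Omega=\{\omega\in[0,1]:\ \text{conditions (C1)--(C4) hold}\}$. Then $\Omega$ is a (possibly empty) subinterval of $[0,1]$. Moreover each of the following occurs for suitable values of the fixed parameters satisfying (A1): $\Omega=\emptyset$ (unconditionally unstable); $\Omega=[0,1]$ (unconditionally stable); $\Omega=[0,\bar\omega)$ with $\bar\omega\in(0,1)$ (destabilizing); $\Omega=(\bar\omega,1]$ with $\bar\omega\in(0,1)$ (stabilizing); $\Omega=(\omega_a,\omega_b)$ with $0<\omega_a<\omega_b<1$ (mixed).
   Context: Parameters: $c\in(0,1)$, $\gamma>0$, $\omega\in[0,1]$, $h>0$, $d>0$, $\sigma>0$, $\mu>0$, $b>0$, $\beta>0$, and $E=\mu\sigma(1-2b^2\beta)$. Assumption (A1): $1-c-hd>0$. Conditions (C1)--(C4) are: (C1) $E>0$; (C2) $(2-E)(1+c+2\gamma)-\omega^2dhE>0$; (C3) $1-c+cE+\omega^2dhE+\gamma c-E\gamma-E\gamma c+E^2\gamma-E^2\gamma^2+E\gamma^2-\gamma>0$; (C4) $2\gamma+c-cE-\gamma E-\omega^2dhE<3$. These are the conditions guaranteeing that all eigenvalues of the Jacobian matrix $\begin{pmatrix}c+\gamma&\omega h&-\gamma\\ \omega dE&1-E&0\\1&0&0\end{pmatrix}$ (the Jacobian, at the unbiased steady state $S^*$, of the model map) lie in the open unit disk. *)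

(* Defs.v *)
From Stdlib Require Import Reals Lra.
Open Scope R_scope.

Definition Eval (sigma mu b beta : R) : R := mu * sigma * (1 - 2 * b ^ 2 * beta).

Definition params_ok (c gamma h d sigma mu b beta : R) : Prop :=
  0 < c < 1 /\ 0 < gamma /\ 0 < h /\ 0 < d /\ 0 < sigma /\ 0 < mu /\
  0 < b /\ 0 < beta /\
  (* (A1) *) 1 - c - h * d > 0.

Definition C1 (E : R) : Prop := E > 0.
Definition C2 (c gamma omega h d E : R) : Prop :=
  (2 - E) * (1 + c + 2 * gamma) - omega ^ 2 * d * h * E > 0.
Definition C3 (c gamma omega h d E : R) : Prop :=
  1 - c + c * E + omega ^ 2 * d * h * E + gamma * c - E * gamma - E * gamma * c
  + E ^ 2 * gamma - E ^ 2 * gamma ^ 2 + E * gamma ^ 2 - gamma > 0.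
Definition C4 (c gamma omega h d E : R) : Prop :=
  2 * gamma + c - c * E - gamma * E - omega ^ 2 * d * h * E < 3.

Definition inOmega (c gamma h d sigma mu b beta omega : R) : Prop :=
  let E := Eval sigma mu b beta in
  0 <= omega <= 1 /\ C1 E /\ C2 c gamma omega h d E /\
  C3 c gamma omega h d E /\ C4 c gamma omega h d E.

Definition is_interval (P : R -> Prop) : Prop :=
  forall x y z, P x -> P z -> x <= y <= z -> P y.

(* Main.v *)
Require Import Defs.
From Stdlib Require Import Reals Lra Psatz.
Open Scope R_scope.

Lemma interval_part : forall c gamma h d sigma mu b beta,
      params_ok c gamma h d sigma mu b beta ->
      is_interval (inOmega c gamma h d sigma mu b beta).
Proof.
  intros c gamma h d sigma mu b beta Hp x y z Hx Hz Hy.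
  unfold params_ok in Hp. unfold inOmega, Defs.C1, Defs.C2, Defs.C3, Defs.C4 in *.
  set (E := Eval sigma mu b beta) in *.
  destruct Hx as [Hx0 [H1 [Hx2 [Hx3 Hx4]]]].
  destruct Hz as [Hz0 [_ [Hz2 [Hz3 Hz4]]]].
  assert (Hxy : x ^ 2 <= y ^ 2) by nra.
  assert (Hyz : y ^ 2 <= z ^ 2) by nra.
  assert (HK : 0 < d * h * E).
  { apply Rmult_lt_0_compat; [|exact H1]. apply Rmult_lt_0_compat; lra. }
  assert (e1 : x ^ 2 * d * h * E <= y ^ 2 * d * h * E).
  { replace (x ^ 2 * d * h * E) with (x^2 * (d*h*E)) by ring.
    replace (y ^ 2 * d * h * E) with (y^2 * (d*h*E)) by ring. nra. }
  assert (e2 : y ^ 2 * d * h * E <= z ^ 2 * d * h * E).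
  { replace (z ^ 2 * d * h * E) with (z^2 * (d*h*E)) by ring.
    replace (y ^ 2 * d * h * E) with (y^2 * (d*h*E)) by ring. nra. }
  repeat split; try lra; exact H1.
Qed.

Theorem proposition6 :
  (* Omega is a (possibly empty) subinterval of [0,1] *)
  (forall c gamma h d sigma mu b beta,
      params_ok c gamma h d sigma mu b beta ->
      is_interval (inOmega c gamma h d sigma mu b beta))
  /\
  (* Omega = empty: unconditionally unstable *)
  (exists c gamma h d sigma mu b beta,
      params_ok c gamma h d sigma mu b beta /\
      forall omega, ~ inOmega c gamma h d sigma mu b beta omega)
  /\
  (* Omega = [0,1]: unconditionally stable *)
  (exists c gamma h d sigma mu b beta,
      params_ok c gamma h d sigma mu b beta /\
      forall omega, inOmega c gamma h d sigma mu b beta omega <-> 0 <= omega <= 1)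
  /\
  (* Omega = [0, wbar) with wbar in (0,1): destabilizing *)
  (exists c gamma h d sigma mu b beta wbar,
      params_ok c gamma h d sigma mu b beta /\ 0 < wbar < 1 /\
      forall omega, inOmega c gamma h d sigma mu b beta omega <-> 0 <= omega < wbar)
  /\
  (* Omega = (wbar, 1] with wbar in (0,1): stabilizing *)
  (exists c gamma h d sigma mu b beta wbar,
      params_ok c gamma h d sigma mu b beta /\ 0 < wbar < 1 /\
      forall omega, inOmega c gamma h d sigma mu b beta omega <-> wbar < omega <= 1)
  /\
  (* Omega = (wa, wb) with 0 < wa < wb < 1: mixed *)
  (exists c gamma h d sigma mu b beta wa wb,
      params_ok c gamma h d sigma mu b beta /\ 0 < wa /\ wa < wb /\ wb < 1 /\
      forall omega, inOmega c gamma h d sigma mu b beta omega <-> wa < omega < wb).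
Proof.
  split; [exact interval_part|].
  split.
  { exists (1/2), 1, (1/10), 1, 1, 1, 1, 1.
    split; [unfold params_ok; lra|].
    intros w H. unfold inOmega, Defs.C1, Eval in H. cbv zeta in H. destruct H as [_ [H1 _]]. simpl in H1. lra. }
  split.
  { exists (1/2), (1/2), (1/10), (1/10), 1, 2, (1/2), 1.
    split; [unfold params_ok; lra|].
    intro w; unfold inOmega, Defs.C1, Defs.C2, Defs.C3, Defs.C4, Eval; cbv zeta; split.
    - intros [H _]; exact H.
    - intros H. assert (0 <= w^2 <= 1) by nra. repeat split; lra. }
  split.
  { exists (1/10), (1/10), (26/95), 1, 1, (19/5), (1/2), 1, (1/2).
    split; [unfold params_ok; lra|]. split; [lra|].
    intro w; unfold inOmega, Defs.C1, Defs.C2, Defs.C3, Defs.C4, Eval; cbv zeta; split.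
    - intros [H [_ [H2 _]]]. split; [lra|]. nra.
    - intros H. assert (0 <= w^2 < 1/4) by nra. repeat split; lra. }
  split.
  { exists (1/20), (11/10), (353/500), 1, 1, (4/5), (1/2), 1, (1/2).
    split; [unfold params_ok; lra|]. split; [lra|].
    intro w; unfold inOmega, Defs.C1, Defs.C2, Defs.C3, Defs.C4, Eval; cbv zeta; split.
    - intros [H [_ [_ [H3 _]]]]. split; [|lra]. nra.
    - intros H. assert (1/4 < w^2 <= 1) by nra. repeat split; lra. }
  { exists (404/1625), (6/5), (7007/11125), 1, 1, (89/25), (1/2), 1, (5/7), (11/13).
    split; [unfold params_ok; lra|]. split; [lra|]. split; [lra|]. split; [lra|].
    intro w; unfold inOmega, Defs.C1, Defs.C2, Defs.C3, Defs.C4, Eval; cbv zeta; split.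
    - intros [H [_ [H2 [H3 _]]]]. split; nra.
    - intros H. assert (25/49 < w^2 < 121/169) by nra. repeat split; lra. }
Qed.
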